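(* Let $\sigma$ be a strongly erasing $k$-block substitution with $w_\epsilon\ne1^k$ that satisfies the optimality condition. Then the set $\mathcal D$ of points $x\in\mathbb I$ whose $f_\sigma$-orbit $\{f_\sigma^n(x):n\ge0\}$ is dense in $\mathbb I$ is uncountable and dense in $\mathbb I$.
   Context: Notation: $\mathbb I=[0,1]$. $\{0,1\}^*$ and $\{0,1\}^\omega$ denote finite and infinite binary words, and $\epsilon$ is the empty word. For a word $w$, set $0.w=\sum_iw_i2^{-i}$. For $x\in(0,1]$, $\widetilde x$ is the unique infinite binary expansion of $x$ not ending in $0^\infty$. Fix $k\ge2$. An erasing $k$-block substitution is a map $\sigma:\{0,1\}^k\to\{0,1\}^*$ with exactly one block $w_\epsilon$ such that $\sigma(w_\epsilon)=\epsilon$. It acts blockwise on infinite words and on finite words of length a multiple of $k$, concatenating the images of consecutive $k$-blocks. $k$-rounding: a $k$-rounding of $w$ is any word $wv$ whose length is the least multiple of $k$ that is $\ge|w|$; if $|w|$ is a multiple of $k$, the only $k$-rounding of $w$ is $w$ itself. $\sigma$ is strongly erasing if for every $w\in\{0,1\}^*$ there exist $n\in\mathbb N$ and words $r_0,\dots,r_{n-1}$ such that $r_0$ is a $k$-rounding of $w$, $r_j$ is a $k$-rounding of $\sigma(r_{j-1})$ for $1\le j\le n-1$, and $\sigma(r_{n-1})=\epsilon$. The map $f_\sigma:\mathbb I\to\mathbb I$ is defined by $f_\sigma(x)=0.\sigma(\widetilde x)$ if $x\in(0,1]$ and $\widetilde x\neq w_\epsilon^\infty$, and $f_\sigma(x)=0$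 otherwise. Optimality condition: every $w\in\{0,1\}^\omega$ can be written as $w=\prod_{i\ge1}\sigma(b_i)$ with blocks $b_i\in\{0,1\}^k$ satisfying $\sigma(b_i)\ne\epsilon$. *)

(* Defs.v *)
From HB Require Import structures.
From Stdlib Require Import ClassicalEpsilon.
From mathcomp Require Import all_boot all_order all_algebra.
From mathcomp Require Import all_classical all_reals all_analysis.
Set Implicit Arguments. Unset Strict Implicit. Unset Printing Implicit Defensive.
Import Order.TTheory GRing.Theory Num.Theory numFieldNormedType.Exports.
Local Open Scope ring_scope.
Local Open Scope classical_set_scope.

(* Infinite binary words are [nat -> bool], letter i (0-based) is the
   (i+1)-th letter; finite words are [seq bool]. *)

Definition fval {R : realType} (s : seq bool) : R :=
  \sum_(i < size s) (nth false s i)%:R / 2 ^+ i.+1.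

Definition ival {R : realType} (w : nat -> bool) : R :=
  limn (fun n => fval (mkseq w n)).

Definition not_end0 (w : nat -> bool) : Prop :=
  forall n, exists m, (n <= m)%N /\ w m = true.

(* x~ : the unique infinite binary expansion of x not ending in 0^oo
   (meaningful for x in (0,1]) *)
Definition tilde {R : realType} (x : R) : nat -> bool :=
  epsilon (inhabits (fun _ => false)) (fun w => not_end0 w /\ ival w = x).

Definition iblock (k : nat) (w : nat -> bool) (i : nat) : k.-tuple bool :=
  [tuple w (i * k + j)%N | j < k].

Definition fblock (k : nat) (s : seq bool) (i : nat) : k.-tuple bool :=
  [tuple nth false s (i * k + j)%N | j < k].

Definition sigma_fin (k : nat) (sigma : k.-tuple bool -> seq bool)
  (s : seq bool) : seq bool :=
  flatten [seq sigma (fblock k s i) | i <- iota 0 (size s %/ k)].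

Definition sigma_pref (k : nat) (sigma : k.-tuple bool -> seq bool)
  (w : nat -> bool) (n : nat) : seq bool :=
  flatten [seq sigma (iblock k w i) | i <- iota 0 n].

(* 0.sigma(w) for an infinite word w (sigma(w) may be finite or infinite):
   the limit of the values of the prefixes sigma(b_1)...sigma(b_n) *)
Definition sigma_val {R : realType} (k : nat) (sigma : k.-tuple bool -> seq bool)
  (w : nat -> bool) : R :=
  limn (fun n => fval (sigma_pref sigma w n)).

Definition periodic (k : nat) (b : k.-tuple bool) : nat -> bool :=
  fun n => nth false b (n %% k).

Definition f_sigma {R : realType} (k : nat) (sigma : k.-tuple bool -> seq bool)
  (weps : k.-tuple bool) (x : R) : R :=
  if `[< 0 < x <= 1 /\ tilde x <> periodic weps >] then sigma_val sigma (tilde x)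
  else 0.

(* r is a k-rounding of w: r = w v with |r| the least multiple of k that is >= |w| *)
Definition krounding (k : nat) (w r : seq bool) : Prop :=
  exists v, r = w ++ v /\ size r = (k * ((size w + k.-1) %/ k))%N.

Definition strongly_erasing (k : nat) (sigma : k.-tuple bool -> seq bool) : Prop :=
  forall w : seq bool, exists rs : seq (seq bool),
    [/\ rs != [::],
        krounding k w (head [::] rs),
        (forall j, (0 < j < size rs)%N ->
            krounding k (sigma_fin sigma (nth [::] rs j.-1)) (nth [::] rs j))
      & sigma_fin sigma (last [::] rs) = [::]].

Definition optimal (k : nat) (sigma : k.-tuple bool -> seq bool) : Prop :=
  forall w : nat -> bool, exists b : nat -> k.-tuple bool,
    (forall i, sigma (b i) <> [::]) /\
    (forall n, let p := flatten [seq sigma (b i) | i <- iota 0 n] in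
               p = mkseq w (size p)).

(* Main.v *)
Require Import Defs.
From HB Require Import structures.
From Stdlib Require Import Classical ClassicalEpsilon.
From mathcomp Require Import all_boot all_order all_algebra.
From mathcomp Require Import all_classical all_reals all_analysis.
From mathcomp Require Import zify.
Import Order.TTheory GRing.Theory Num.Theory numFieldNormedType.Exports.
Set Implicit Arguments. Unset Strict Implicit. Unset Printing Implicit Defensive.

Definition prefixw (s t : seq bool) := exists x, t = s ++ x.
Definition isPre (s : seq bool) (w : nat -> bool) :=
  forall m, m < size s -> nth false s m = w m.

Lemma prefixw_refl s : prefixw s s.
Proof. by exists [::]; rewrite cats0. Qed.

Lemma prefixw_trans s t u : prefixw s t -> prefixw t u -> prefixw s u.
Proof. by case=> x -> [y ->]; exists (x ++ y); rewrite catA. Qed.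

Lemma nth_prefixw s t m : prefixw s t -> m < size s -> nth false t m = nth false s m.
Proof. by case=> x -> hm; rewrite nth_cat hm. Qed.

Lemma size_prefixw s t : prefixw s t -> size s <= size t.
Proof. by case=> x ->; rewrite size_cat leq_addr. Qed.

Lemma count_prefix s t : prefixw s t -> count id s <= count id t.
Proof. by case=> x ->; rewrite count_cat leq_addr. Qed.

Lemma sp_split k (sigma : k.-tuple bool -> seq bool) w n d :
  sigma_pref sigma w (n + d) =
  sigma_pref sigma w n ++ flatten [seq sigma (iblock k w i) | i <- iota n d].
Proof. by rewrite /sigma_pref iotaD map_cat flatten_cat. Qed.

Lemma sp_mono k (sigma : k.-tuple bool -> seq bool) w n n' : n <= n' ->
  prefixw (sigma_pref sigma w n) (sigma_pref sigma w n').
Proof. by move=> /subnKC <-; rewrite sp_split; eexists. Qed.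

Definition Sinf k (sigma : k.-tuple bool -> seq bool) (w : nat -> bool) (m : nat) : bool :=
  match pselect (exists n, m < size (sigma_pref sigma w n)) with
  | left H => nth false (sigma_pref sigma w (xchoose H)) m
  | right _ => false
  end.

Lemma Sinf_pref k (sigma : k.-tuple bool -> seq bool) w n m :
  m < size (sigma_pref sigma w n) -> Sinf sigma w m = nth false (sigma_pref sigma w n) m.
Proof.
rewrite /Sinf; case: pselect => [H|H] hm; last by exfalso; apply: H; exists n.
have hx := xchooseP H; move: hx; set n' := xchoose H => hx.
case: (leqP n n') => h; first by rewrite (nth_prefixw (sp_mono _ _ h)).
by rewrite (nth_prefixw (sp_mono _ _ (ltnW h)) hx).
Qed.

Lemma Sinf_none k (sigma : k.-tuple bool -> seq bool) w m :
  (forall n, size (sigma_pref sigma w n) <= m) -> Sinf sigma w m = false.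
Proof.
rewrite /Sinf; case: pselect => // -[n hn] h.
by move: (h n); rewrite leqNgt hn.
Qed.

Definition inf k (sigma : k.-tuple bool -> seq bool) w :=
  forall m, exists n, m < size (sigma_pref sigma w n).

Definition cat_inf (s : seq bool) (y : nat -> bool) (m : nat) : bool :=
  if m < size s then nth false s m else y (m - size s).

Lemma cat_inf_cat s t y : cat_inf s (cat_inf t y) = cat_inf (s ++ t) y.
Proof.
apply: funext => m; rewrite /cat_inf size_cat nth_cat.
case: (ltnP m (size s)) => h1.
  by rewrite (ltn_addr _ h1).
case: ifP => h2; first by rewrite ifT //; lia.
rewrite ifF; last by apply/negbTE; rewrite -leqNgt; lia.
by rewrite subnDA.
Qed.

Lemma cat_inf_nil y : cat_inf [::] y = y.
Proof. by apply: funext => m; rewrite /cat_inf /= subn0. Qed.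

Lemma iblock_cat k s y a i : 0 < k -> size s = a * k ->
  iblock k (cat_inf s y) i = if i < a then fblock k s i else iblock k y (i - a).
Proof.
move=> k0 hs; rewrite /iblock /fblock /cat_inf hs.
case: ifP => hi; apply: eq_mktuple => j /=.
  have -> : i * k + j < a * k by have := ltn_ord j; nia.
  by [].
have -> : (i * k + j < a * k) = false.
  by apply/negbTE; rewrite -leqNgt; move/negbT: hi; rewrite -leqNgt; nia.
congr y; move/negbT: hi; rewrite -leqNgt; nia.
Qed.

Lemma sp_cat k (sigma : k.-tuple bool -> seq bool) s y a n : 0 < k -> size s = a * k ->
  sigma_pref sigma (cat_inf s y) (a + n) = sigma_fin sigma s ++ sigma_pref sigma y n.
Proof.
move=> k0 hs; rewrite sp_split; congr (_ ++ _).
  rewrite /sigma_pref /sigma_fin hs mulnK //; congr flatten.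
  apply/eq_in_map => i; rewrite mem_iota => /andP[_ hi].
  by rewrite (iblock_cat _ _ k0 hs) hi.
rewrite /sigma_pref -{1}(addn0 a) iotaDl -map_comp; congr flatten.
apply: eq_map => i /=; rewrite (iblock_cat _ _ k0 hs) ifF; last by apply/negbTE; rewrite -leqNgt leq_addr.
by rewrite addKn.
Qed.

Lemma Sinf_cat k (sigma : k.-tuple bool -> seq bool) s y a : 0 < k -> size s = a * k ->
  Sinf sigma (cat_inf s y) = cat_inf (sigma_fin sigma s) (Sinf sigma y).
Proof.
move=> k0 hs; apply: funext => m; rewrite /cat_inf; case: ifP => hm.
  rewrite (@Sinf_pref _ _ _ (a + 0)) ?sp_cat // ?nth_cat ?hm //.
  by rewrite size_cat (ltn_addr _ hm).
case: (pselect (exists n, m - size (sigma_fin sigma s) < size (sigma_pref sigma y n))) => [[n hn]|hn].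
  rewrite (@Sinf_pref _ _ _ (a + n)) ?sp_cat // ?nth_cat ?hm ?(Sinf_pref hn) //.
  rewrite size_cat; move/negbT: hm; rewrite -leqNgt => hm; lia.
rewrite [RHS]Sinf_none; last first.
  move=> n; rewrite leqNgt; apply/negP => h; apply: hn; by exists n.
rewrite Sinf_none // => n.
have h1 := size_prefixw (sp_mono sigma (cat_inf s y) (leq_addl a n)).
rewrite sp_cat // size_cat in h1.
have h2 : size (sigma_pref sigma y n) <= m - size (sigma_fin sigma s).
  rewrite leqNgt; apply/negP => h; apply: hn; by exists n.
move/negbT: hm; rewrite -leqNgt => hm; rewrite -/(cat_inf s y); lia.
Qed.

Lemma opt_pre k (sigma : k.-tuple bool -> seq bool) : 0 < k -> optimal sigma ->
  forall z, exists y, Sinf sigma y = z.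
Proof.
move=> k0 opt z; case: (opt z) => b [hb hp].
pose y m := nth false (b (m %/ k)) (m %% k).
have hib i : iblock k y i = b i.
  apply: eq_from_tnth => j; rewrite tnth_mktuple /y divnMDl // modnMDl.
  by rewrite divn_small // modn_small // addn0 (tnth_nth false).
have hpy n : sigma_pref sigma y n = flatten [seq sigma (b i) | i <- iota 0 n].
  by rewrite /sigma_pref; congr flatten; apply: eq_map => i; rewrite hib.
have hsz n : n <= size (sigma_pref sigma y n).
  elim: n => // n IH; rewrite -addn1 sp_split size_cat /= cats0 hib.
  have : size (sigma (b n)) != 0 by rewrite size_eq0; apply/eqP/hb.
  lia.
exists y; apply: funext => m.
rewrite (@Sinf_pref _ _ _ m.+1); last exact: hsz.
have hpm : flatten [seq sigma (b i) | i <- iota 0 m.+1] =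
   mkseq z (size (flatten [seq sigma (b i) | i <- iota 0 m.+1])) := hp m.+1.
rewrite hpy {1}hpm nth_mkseq // -hpy; exact: hsz.
Qed.

Lemma opt_pre_iter k (sigma : k.-tuple bool -> seq bool) : 0 < k -> optimal sigma ->
  forall n z, exists y, iter n (Sinf sigma) y = z.
Proof.
move=> k0 opt; elim=> [|n IH] z; first by exists z.
have [y hy] := IH z; have [y' hy'] := opt_pre k0 opt y.
by exists y'; rewrite iterSr hy'.
Qed.

Lemma E_chain k (sigma : k.-tuple bool -> seq bool) : 0 < k -> optimal sigma ->
  forall rs r0, (exists a, size r0 = a * k) ->
  (forall j, j < size rs ->
     krounding k (sigma_fin sigma (nth [::] (r0 :: rs) j)) (nth [::] rs j)) ->
  sigma_fin sigma (last r0 rs) = [::] ->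
  forall z, exists y, iter (size rs).+1 (Sinf sigma) (cat_inf r0 y) = z.
Proof.
move=> k0 opt; elim=> [|r1 rs IH] r0 [a ha] hch hl z.
  have [y hy] := opt_pre k0 opt z; exists y => /=.
  by rewrite (Sinf_cat _ _ k0 ha) hl cat_inf_nil.
have [v1 [e1 s1]] := hch 0 isT.
have [y1 hy1] : exists y1, iter (size rs).+1 (Sinf sigma) (cat_inf r1 y1) = z.
  apply: IH => //; first by exists ((size (sigma_fin sigma r0) + k.-1) %/ k); rewrite s1 mulnC.
  by move=> j hj; apply: (hch j.+1).
have [y0 hy0] := opt_pre k0 opt (cat_inf v1 y1).
exists y0; change (iter (size rs).+2 (Sinf sigma) (cat_inf r0 y0) = z).
by rewrite iterSr (Sinf_cat _ _ k0 ha) hy0 cat_inf_cat -e1.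
Qed.

Lemma Erase k (sigma : k.-tuple bool -> seq bool) : 0 < k -> optimal sigma ->
  strongly_erasing sigma ->
  forall u z, exists y n, iter n (Sinf sigma) (cat_inf u y) = z.
Proof.
move=> k0 opt se u z; have [rs [hne hh hch hl]] := se u.
case: rs hne hh hch hl => // r0 rs _ [v0 [e0 s0]] hch hl.
have [y0 hy0] : exists y0, iter (size rs).+1 (Sinf sigma) (cat_inf r0 y0) = z.
  apply: E_chain => //; first by exists ((size u + k.-1) %/ k); rewrite s0 mulnC.
  by move=> j hj; apply: (hch j.+1).
by exists (cat_inf v0 y0), (size rs).+1; rewrite cat_inf_cat -e0.
Qed.

Lemma isPre_mkseq s w : isPre s w <-> s = mkseq w (size s).
Proof.
split=> [h|->]; last by move=> m; rewrite size_mkseq => hm; rewrite nth_mkseq.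
by apply: (@eq_from_nth _ false); rewrite ?size_mkseq // => m hm; rewrite nth_mkseq // h.
Qed.

Lemma mkseq_isPre w L : isPre (mkseq w L) w.
Proof. by apply/isPre_mkseq; rewrite size_mkseq. Qed.

Lemma mkseq_prefix w L L' : L <= L' -> prefixw (mkseq w L) (mkseq w L').
Proof.
move=> /subnKC <-; rewrite /mkseq iotaD map_cat; by eexists.
Qed.

Lemma isPre_take s w L : isPre s w -> L <= size s -> prefixw (mkseq w L) s.
Proof. by move=> /isPre_mkseq {2}-> h; apply: mkseq_prefix. Qed.

Lemma prefix_isPre s t w : prefixw s t -> isPre t w -> isPre s w.
Proof.
move=> hp ht m hm; rewrite -(nth_prefixw hp hm); apply: ht.
exact: leq_trans hm (size_prefixw hp).
Qed.

Lemma sf_mkseq k (sigma : k.-tuple bool -> seq bool) w L : 0 < k ->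
  sigma_fin sigma (mkseq w L) = sigma_pref sigma w (L %/ k).
Proof.
move=> k0; rewrite /sigma_fin size_mkseq /sigma_pref; congr flatten.
apply/eq_in_map => i; rewrite mem_iota => /andP[_ hi]; congr sigma.
rewrite /fblock /iblock; apply: eq_mktuple => j; rewrite nth_mkseq //.
have := leq_divM L k; have := ltn_ord j; rewrite add0n in hi; nia.
Qed.

Lemma isPre_sf k (sigma : k.-tuple bool -> seq bool) s w : 0 < k -> isPre s w ->
  isPre (sigma_fin sigma s) (Sinf sigma w).
Proof.
move=> k0 /isPre_mkseq ->; rewrite sf_mkseq // => m hm.
by rewrite (Sinf_pref hm).
Qed.

Lemma isPre_iter k (sigma : k.-tuple bool -> seq bool) j s w : 0 < k -> isPre s w ->
  isPre (iter j (sigma_fin sigma) s) (iter j (Sinf sigma) w).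
Proof. by move=> k0 h; elim: j => //= j IH; apply: isPre_sf. Qed.

Lemma sf_prefix k (sigma : k.-tuple bool -> seq bool) s t : 0 < k -> prefixw s t ->
  prefixw (sigma_fin sigma s) (sigma_fin sigma t).
Proof.
move=> k0 [x ->]; rewrite /sigma_fin.
have : size s %/ k <= size (s ++ x) %/ k by rewrite leq_div2r // size_cat leq_addr.
move=> /subnKC <-; rewrite iotaD map_cat flatten_cat; eexists; congr (_ ++ _).
congr flatten; apply/eq_in_map => i; rewrite mem_iota => /andP[_ hi]; congr sigma.
rewrite /fblock; apply: eq_mktuple => j; rewrite nth_cat ifT //.
have := leq_divM (size s) k; have := ltn_ord j; rewrite add0n in hi; nia.
Qed.

Lemma iter_sf_prefix k (sigma : k.-tuple bool -> seq bool) j s t : 0 < k -> prefixw s t ->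
  prefixw (iter j (sigma_fin sigma) s) (iter j (sigma_fin sigma) t).
Proof. by move=> k0 h; elim: j => //= j IH; apply: sf_prefix. Qed.

Lemma growth k (sigma : k.-tuple bool -> seq bool) j w : 0 < k ->
  (forall j', j' < j -> inf sigma (iter j' (Sinf sigma) w)) ->
  forall m, exists L, m <= size (iter j (sigma_fin sigma) (mkseq w L)).
Proof.
move=> k0; elim: j => [|j IH] hinf m; first by exists m; rewrite size_mkseq.
have [n hn] := hinf j (ltnSn j) m.
have [L hL] := IH (fun j' h => hinf j' (ltnW h)) (n * k).
exists L; set s := iter j (sigma_fin sigma) (mkseq w L) in hL *.
have hp : isPre s (iter j (Sinf sigma) w) by apply: isPre_iter => //; exact: mkseq_isPre.
have := sf_prefix sigma k0 (isPre_take hp hL); rewrite sf_mkseq // mulnK // => h.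
change (m <= size (sigma_fin sigma s)); have := size_prefixw h; lia.
Qed.

Lemma not_end0_count w : not_end0 w -> forall c, exists L, c <= count id (mkseq w L).
Proof.
move=> h; elim=> [|c [L hL]]; first by exists 0.
have [m [hm wm]] := h L; exists m.+1.
rewrite mkseqS -cats1 count_cat /= wm.
have := count_prefix (mkseq_prefix w hm); lia.
Qed.

Lemma count_zero_tail w n : (forall m, n <= m -> w m = false) ->
  forall L, count id (mkseq w L) <= n.
Proof.
move=> h L; suff : count id (mkseq w L) <= minn L n by lia.
elim: L => [|L IH] //; rewrite mkseqS -cats1 count_cat /=.
case: (ltnP L n) => hL; first by have := count_size id (mkseq w L); rewrite size_mkseq; lia.
by rewrite h //=; lia.
Qed.

Lemma count_not_end0 w : (forall c, exists s, isPre s w /\ c <= count id s) -> not_end0 w.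
Proof.
move=> h n; apply: NNPP => hn.
have hz : forall m, n <= m -> w m = false.
  move=> m hm; apply/negP => wm; apply: hn; by exists m.
have [s [hs hc]] := h n.+1; move/isPre_mkseq: hs hc => ->.
by have := count_zero_tail hz (size s); lia.
Qed.

Definition ev_per (w : nat -> bool) :=
  exists p q, 0 < p /\ forall m, q <= m -> w (m + p) = w m.

Lemma flatten_nseqS (C : seq bool) c : flatten (nseq c.+1 C) = flatten (nseq c C) ++ C.
Proof. elim: c => [|c IH] /=; first by rewrite cats0. by rewrite -catA -IH. Qed.

Lemma size_flatten_nseq (C : seq bool) c : size (flatten (nseq c C)) = c * size C.
Proof. elim: c => [|c IH] //=; rewrite size_cat IH; lia. Qed.

Lemma flatten_nil_mem (s : seq (seq bool)) x : flatten s = [::] -> x \in s -> x = [::].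
Proof.
elim: s => //= y s IH; case: y => [|b y'] /= hf; last by [].
by rewrite inE => /orP[/eqP ->|] //; apply: IH.
Qed.

Lemma flatten_map_nil (f : nat -> seq bool) s :
  (forall i, i \in s -> f i = [::]) -> flatten (map f s) = [::].
Proof.
elim: s => //= i s IH h; rewrite h ?mem_head // IH // => j hj.
by apply: h; rewrite inE hj orbT.
Qed.

Lemma per_Sinf k (sigma : k.-tuple bool -> seq bool) w : 0 < k -> ev_per w ->
  ev_per (Sinf sigma w).
Proof.
move=> k0 [p [q [p0 hw]]].
have hwc c m : q <= m -> w (m + c * p) = w m.
  move=> hm; elim: c => [|c IH]; first by rewrite addn0.
  have -> : m + c.+1 * p = (m + c * p) + p by rewrite mulSn; lia.
  by rewrite hw ?IH //; lia.
have hb i : q <= i -> iblock k w (i + p) = iblock k w i.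
  move=> hi; rewrite /iblock; apply: eq_mktuple => j.
  have -> : (i + p) * k + j = (i * k + j) + k * p by lia.
  by rewrite hwc //; nia.
have hbc c i : q <= i -> iblock k w (c * p + i) = iblock k w i.
  move=> hi; elim: c => [|c IH] //.
  have -> : c.+1 * p + i = (c * p + i) + p by rewrite mulSn; lia.
  by rewrite hb ?IH //; lia.
pose A := sigma_pref sigma w q.
pose C := flatten [seq sigma (iblock k w i) | i <- iota q p].
have hpc c : sigma_pref sigma w (q + c * p) = A ++ flatten (nseq c C).
  elim: c => [|c IH]; first by rewrite addn0 cats0.
  rewrite mulSn (addnC p) addnA sp_split IH flatten_nseqS -catA; congr (_ ++ (_ ++ _)).
  rewrite /C addnC iotaDl -map_comp; congr flatten; apply/eq_in_map => i.
  by rewrite mem_iota => /andP[hi _] /=; rewrite hbc.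
case: (eqVneq C [::]) => hC.
  have hnil i : q <= i -> sigma (iblock k w i) = [::].
    move=> hi; have -> : i = (i - q) %/ p * p + (q + (i - q) %% p).
      by have := divn_eq (i - q) p; lia.
    rewrite hbc; last by lia.
    have : sigma (iblock k w (q + (i - q) %% p)) \in
       [seq sigma (iblock k w i) | i <- iota q p].
      by apply: map_f; rewrite mem_iota leq_addr /= ltn_add2l ltn_pmod.
    exact: flatten_nil_mem.
  exists 1, (size A); split => // m hm; rewrite !Sinf_none // => n.
    case: (leqP n q) => hn.
      by have := size_prefixw (sp_mono sigma w hn); rewrite -/A; lia.
    rewrite -(subnKC (ltnW hn)) sp_split.
    have -> : flatten [seq sigma (iblock k w i) | i <- iota q (n - q)] = [::].
      by apply: flatten_map_nil => i; rewrite mem_iota => /andP[hi _]; apply: hnil.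
    by rewrite cats0 -/A; lia.
  case: (leqP n q) => hn.
    by have := size_prefixw (sp_mono sigma w hn); rewrite -/A; lia.
  rewrite -(subnKC (ltnW hn)) sp_split.
  have -> : flatten [seq sigma (iblock k w i) | i <- iota q (n - q)] = [::].
    by apply: flatten_map_nil => i; rewrite mem_iota => /andP[hi _]; apply: hnil.
  by rewrite cats0 -/A; lia.
have sC : 0 < size C by rewrite lt0n size_eq0.
exists (size C), (size A); split => // m hm.
have hsz : m + size C < size (sigma_pref sigma w (q + (m.+2) * p)).
  by rewrite hpc size_cat size_flatten_nseq; nia.
rewrite (Sinf_pref hsz) (@Sinf_pref _ _ _ (q + m.+2 * p)); last by lia.
rewrite hpc.
set F := flatten (nseq m.+2 C).
have eF : F = C ++ flatten (nseq m.+1 C) by [].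
have eF2 : F = flatten (nseq m.+1 C) ++ C by rewrite /F flatten_nseqS.
have sF1 : size (flatten (nseq m.+1 C)) = m.+1 * size C by apply: size_flatten_nseq.
rewrite nth_cat ifF; last by apply/negbTE; rewrite -leqNgt; lia.
rewrite nth_cat ifF; last by apply/negbTE; rewrite -leqNgt; lia.
rewrite [in LHS]eF [in RHS]eF2 nth_cat ifF; last by apply/negbTE; rewrite -leqNgt; lia.
rewrite nth_cat ifT; last by rewrite sF1; nia.
by congr nth; lia.
Qed.

Lemma per_iter k (sigma : k.-tuple bool -> seq bool) d w : 0 < k -> ev_per w ->
  ev_per (iter d (Sinf sigma) w).
Proof. by move=> k0 h; elim: d => //= d IH; apply: per_Sinf. Qed.

Lemma nonper_iter k (sigma : k.-tuple bool -> seq bool) N j w : 0 < k -> j <= N ->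
  ~ ev_per (iter N (Sinf sigma) w) -> ~ ev_per (iter j (Sinf sigma) w).
Proof.
move=> k0 /subnKC <- h hp; apply: h; rewrite addnC iterD; exact: per_iter.
Qed.

Lemma nonper_not_end0 w : ~ ev_per w -> not_end0 w.
Proof.
move=> h n; apply: NNPP => hn; apply: h; exists 1, n; split => // m hm.
have hz : forall m, n <= m -> w m = false.
  move=> m' hm'; apply/negP => wm; apply: hn; by exists m'.
by rewrite !hz //; lia.
Qed.

Lemma not_end0_inf k (sigma : k.-tuple bool -> seq bool) w :
  not_end0 (Sinf sigma w) -> inf sigma w.
Proof.
move=> h m; apply: NNPP => hm.
have [m' [hm' hw]] := h m; move: hw; rewrite Sinf_none // => n.
rewrite leqNgt; apply/negP => hn; apply: hm; exists n; lia.
Qed.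

Definition zeta (m : nat) : bool := [exists a : 'I_m.+1, m == 2 ^ a].

Lemma zeta_pow a : zeta (2 ^ a).
Proof.
apply/existsP; have h : a < (2 ^ a).+1 by have := ltn_expl a (isT : 1 < 2); lia.
by exists (Ordinal h).
Qed.

Lemma zeta_nonper : ~ ev_per zeta.
Proof.
move=> [p [q [p0 h]]].
pose a := q + p.
have ha : a < 2 ^ a by apply: ltn_expl.
have hq : q <= 2 ^ a by lia.
have := h _ hq; rewrite zeta_pow => /existsP[b /eqP hb].
case: (leqP b a) => hba.
  have := leq_pexp2l (isT : 0 < 2) hba; lia.
have : 2 ^ a.+1 <= 2 ^ b by rewrite leq_pexp2l.
rewrite expnS; lia.
Qed.

Lemma cat_nonper t : ~ ev_per (cat_inf t zeta).
Proof.
move=> [p [q [p0 h]]]; apply: zeta_nonper; exists p, q; split => // m hm.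
have hq : q <= m + size t by lia.
have e1 : (m + size t + p < size t) = false by apply/negbTE; rewrite -leqNgt; lia.
have e2 : (m + size t < size t) = false by apply/negbTE; rewrite -leqNgt; lia.
have := h _ hq; rewrite /cat_inf e1 e2.
have -> : m + size t + p - size t = m + p by lia.
by rewrite addnK.
Qed.

Lemma eventually_all (P : nat -> nat -> Prop) i :
  (forall j L L', L <= L' -> P j L -> P j L') ->
  (forall j, j <= i -> exists L, P j L) -> exists L, forall j, j <= i -> P j L.
Proof.
move=> hm; elim: i => [|i IH] h.
  have [L hL] := h 0 (leqnn 0); exists L => j; rewrite leqn0 => /eqP ->; exact: hL.
have [L1 hL1] := IH (fun j hj => h j (leqW hj)).
have [L2 hL2] := h i.+1 (leqnn _).
exists (maxn L1 L2) => j; rewrite leq_eqVlt => /orP[/eqP ->|hj].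
  by apply: hm hL2; rewrite leq_maxr.
by apply: hm (hL1 j hj); rewrite leq_maxl.
Qed.

Lemma isPre_cat u y : isPre u (cat_inf u y).
Proof. by move=> m hm; rewrite /cat_inf hm. Qed.

Lemma Step k (sigma : k.-tuple bool -> seq bool) : 0 < k -> optimal sigma ->
  strongly_erasing sigma ->
  forall u t i, exists q N, prefixw t (iter N (sigma_fin sigma) (u ++ q)) /\
     forall j, j <= i -> i <= count id (iter j (sigma_fin sigma) (u ++ q)).
Proof.
move=> k0 opt se u t i.
pose z := cat_inf t zeta.
have [z' hz'] := opt_pre_iter k0 opt i z.
have [y [n hy]] := Erase k0 opt se u z'.
pose w0 := cat_inf u y.
have hN : iter (i + n) (Sinf sigma) w0 = z by rewrite iterD hy.
have hnp j : j <= i + n -> ~ ev_per (iter j (Sinf sigma) w0).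
  move=> hj; apply: (nonper_iter k0 hj); rewrite hN; exact: cat_nonper.
have hinf j' : j' < i + n -> inf sigma (iter j' (Sinf sigma) w0).
  move=> hj; apply: not_end0_inf; apply: nonper_not_end0.
  exact: (hnp j'.+1 hj).
have [L0 hL0] := growth k0 hinf (size t).
have hmono j L L' : L <= L' -> prefixw (iter j (sigma_fin sigma) (mkseq w0 L))
                                     (iter j (sigma_fin sigma) (mkseq w0 L')).
  by move=> hL; apply: iter_sf_prefix => //; apply: mkseq_prefix.
have [L1 hL1] : exists L1, forall j, j <= i ->
    i <= count id (iter j (sigma_fin sigma) (mkseq w0 L1)).
  apply: eventually_all.
    by move=> j L L' hL h; apply: leq_trans h (count_prefix (hmono j L L' hL)).
  move=> j hj.
  have hne := nonper_not_end0 (hnp j (leq_trans hj (leq_addr _ _))).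
  have [m hm] := not_end0_count hne i.
  have [L hL] := @growth _ sigma j w0 k0
     (fun j' hj' => hinf j' (leq_trans hj' (leq_trans hj (leq_addr _ _)))) m.
  exists L.
  have hp : isPre (iter j (sigma_fin sigma) (mkseq w0 L)) (iter j (Sinf sigma) w0).
    by apply: isPre_iter => //; exact: mkseq_isPre.
  exact: leq_trans hm (count_prefix (isPre_take hp hL)).
pose L := maxn (maxn L0 L1) (size u).
have [q hq] : prefixw u (mkseq w0 L).
  have e : mkseq w0 (size u) = u.
    by apply/esym/isPre_mkseq; exact: isPre_cat.
  by rewrite -{1}e; apply: mkseq_prefix; rewrite leq_maxr.
exists q, (i + n); rewrite -hq; split.
  have h1 : prefixw t (iter (i + n) (sigma_fin sigma) (mkseq w0 L0)).
    have hp : isPre (iter (i + n) (sigma_fin sigma) (mkseq w0 L0)) z.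
      by rewrite -hN; apply: isPre_iter => //; exact: mkseq_isPre.
    have := isPre_take hp hL0.
    have -> : mkseq z (size t) = t by apply/esym/isPre_mkseq; exact: isPre_cat.
    by [].
  apply: prefixw_trans h1 (hmono _ _ _ _).
  by rewrite /L (leq_trans (leq_maxl L0 L1)) // leq_maxl.
move=> j hj; apply: leq_trans (hL1 j hj) (count_prefix (hmono _ _ _ _)).
by rewrite /L (leq_trans (leq_maxr L0 L1)) // leq_maxl.
Qed.

Definition tgt (i : nat) : seq bool := odflt [::] (@unpickle (seq bool) i).

Lemma tgt_pickle (t : seq bool) : tgt (pickle t) = t.
Proof. by rewrite /tgt pickleK. Qed.

Definition stepP k (sigma : k.-tuple bool -> seq bool) (u t : seq bool) (i : nat) (q : seq bool) :=
  exists N, prefixw t (iter N (sigma_fin sigma) (u ++ q)) /\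
     forall j, j <= i -> i <= count id (iter j (sigma_fin sigma) (u ++ q)).

Definition stepq k (sigma : k.-tuple bool -> seq bool) u t i : seq bool :=
  epsilon (inhabits [::]) (stepP sigma u t i).

Fixpoint Pseq k (sigma : k.-tuple bool -> seq bool) (c : nat -> bool) (u0 : seq bool) i :=
  match i with
  | 0 => u0 ++ stepq sigma u0 (tgt 0) 0
  | i'.+1 => (Pseq sigma c u0 i' ++ [:: c i']) ++
             stepq sigma (Pseq sigma c u0 i' ++ [:: c i']) (tgt i'.+1) i'.+1
  end.

Definition Xw k (sigma : k.-tuple bool -> seq bool) c u0 (m : nat) : bool :=
  nth false (Pseq sigma c u0 m.+1) m.

Lemma Pspec k (sigma : k.-tuple bool -> seq bool) : 0 < k -> optimal sigma ->
  strongly_erasing sigma -> forall c u0 i,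
  exists N, prefixw (tgt i) (iter N (sigma_fin sigma) (Pseq sigma c u0 i)) /\
     forall j, j <= i -> i <= count id (iter j (sigma_fin sigma) (Pseq sigma c u0 i)).
Proof.
move=> k0 opt se c u0 [|i] /=; apply: (epsilon_spec (inhabits [::]) (stepP sigma _ _ _));
  exact: Step.
Qed.

Lemma Pseq_step k (sigma : k.-tuple bool -> seq bool) c u0 i :
  prefixw (Pseq sigma c u0 i ++ [:: c i]) (Pseq sigma c u0 i.+1).
Proof. by eexists. Qed.

Lemma Pseq_mono k (sigma : k.-tuple bool -> seq bool) c u0 i i' : i <= i' ->
  prefixw (Pseq sigma c u0 i) (Pseq sigma c u0 i').
Proof.
move=> /subnKC <-; elim: (i' - i) => [|d IH]; first by rewrite addn0; apply: prefixw_refl.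
apply: prefixw_trans IH _; rewrite addnS.
apply: prefixw_trans (Pseq_step _ _ _ _); by eexists.
Qed.

Lemma Pseq_size k (sigma : k.-tuple bool -> seq bool) c u0 i : i <= size (Pseq sigma c u0 i).
Proof.
elim: i => // i IH; have := size_prefixw (Pseq_step sigma c u0 i).
rewrite size_cat /=; lia.
Qed.

Lemma isPre_Pseq k (sigma : k.-tuple bool -> seq bool) c u0 i :
  isPre (Pseq sigma c u0 i) (Xw sigma c u0).
Proof.
move=> m hm; rewrite /Xw.
have h1 := Pseq_mono sigma c u0 (leq_maxl i m.+1).
have h2 := Pseq_mono sigma c u0 (leq_maxr i m.+1).
rewrite -(nth_prefixw h1 hm) (nth_prefixw h2) //.
by have := Pseq_size sigma c u0 m.+1.
Qed.

Lemma u0_Pseq k (sigma : k.-tuple bool -> seq bool) c u0 : isPre u0 (Xw sigma c u0).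
Proof.
have h : prefixw u0 (Pseq sigma c u0 0) by rewrite /=; eexists.
exact: (prefix_isPre h (@isPre_Pseq _ sigma c u0 0)).
Qed.

Lemma Xw_not_end0 k (sigma : k.-tuple bool -> seq bool) : 0 < k -> optimal sigma ->
  strongly_erasing sigma -> forall c u0 j, not_end0 (iter j (Sinf sigma) (Xw sigma c u0)).
Proof.
move=> k0 opt se c u0 j; apply: count_not_end0 => cc.
have [N [_ h]] := Pspec k0 opt se c u0 (maxn cc j).
exists (iter j (sigma_fin sigma) (Pseq sigma c u0 (maxn cc j))); split.
  by apply: isPre_iter => //; exact: isPre_Pseq.
by apply: leq_trans (h j (leq_maxr _ _)); rewrite leq_maxl.
Qed.

Lemma Xw_target k (sigma : k.-tuple bool -> seq bool) : 0 < k -> optimal sigma ->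
  strongly_erasing sigma -> forall c u0 t, exists N,
  isPre t (iter N (Sinf sigma) (Xw sigma c u0)).
Proof.
move=> k0 opt se c u0 t; have [N [h _]] := Pspec k0 opt se c u0 (pickle t).
exists N; rewrite tgt_pickle in h; apply: prefix_isPre h _.
by apply: isPre_iter => //; exact: isPre_Pseq.
Qed.

Lemma Xw_inj k (sigma : k.-tuple bool -> seq bool) u0 c c' :
  Xw sigma c u0 = Xw sigma c' u0 -> c = c'.
Proof.
move=> hX; apply: funext => i0; apply: NNPP => hne.
have ex : exists i, c i != c' i by exists i0; apply/eqP.
case: (ex_minnP ex) => i /eqP hi hmin.
have heq j : j <= i -> Pseq sigma c u0 j = Pseq sigma c' u0 j.
  elim: j => [|j IH] hj //=.
  have hc : c j = c' j by apply: NNPP => h; have := hmin j (introN eqP h); lia.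
  by rewrite IH ?hc //; lia.
have val cc : Xw sigma cc u0 (size (Pseq sigma cc u0 i)) = cc i.
  rewrite -(@isPre_Pseq _ sigma cc u0 i.+1); last first.
    by have := size_prefixw (Pseq_step sigma cc u0 i); rewrite size_cat /=; lia.
  by rewrite (nth_prefixw (Pseq_step sigma cc u0 i)) ?nth_cat ?ltnn ?subnn // size_cat /= addn1.
apply: hi; rewrite -val -(val c') -(heq i (leqnn i)) hX //.
Qed.

From mathcomp Require Import lra.
Local Open Scope ring_scope.
Local Open Scope classical_set_scope.

Definition ee {R : realType} (n : nat) : R := ((2:R) ^+ n)^-1.

Lemma ee_half (R : realType) n : ee n = 2 * (ee n.+1 : R).
Proof.
rewrite /ee exprS invfM mulrA mulfV ?mul1r //.
Qed.

Lemma ee_pos (R : realType) n : 0 < (ee n : R).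
Proof. by rewrite /ee invr_gt0 exprn_gt0. Qed.

Lemma ee0 (R : realType) : (ee 0 : R) = 1.
Proof. by rewrite /ee expr0 invr1. Qed.

Lemma bit_bound (R : realType) (b : bool) n :
  0 <= (b : nat)%:R / (2:R) ^+ n.+1 <= ee n.+1.
Proof. by case: b; rewrite /= ?mul1r ?mul0r ?lexx ?(ltW (ee_pos _ _)) //= invr_ge0 exprn_ge0. Qed.

Lemma fval_rcons (R : realType) s (b : bool) :
  fval (rcons s b) = fval s + (b : nat)%:R / (2:R) ^+ (size s).+1 :> R.
Proof.
rewrite /fval size_rcons big_ord_recr /= nth_rcons ltnn eqxx; congr (_ + _).
by apply: eq_bigr => i _; rewrite nth_rcons ltn_ord.
Qed.

Definition uu {R : realType} (w : nat -> bool) (n : nat) : R := fval (mkseq w n).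

Lemma uu0 (R : realType) w : uu w 0 = 0 :> R.
Proof. by rewrite /uu /fval big_ord0. Qed.

Lemma uuS (R : realType) w n : uu w n.+1 = uu w n + (w n : nat)%:R / (2:R) ^+ n.+1 :> R.
Proof. by rewrite /uu mkseqS fval_rcons size_mkseq. Qed.

Lemma uu_step (R : realType) w n : uu w n <= uu w n.+1 :> R.
Proof. by rewrite uuS; have := bit_bound R (w n) n; lra. Qed.

Lemma uu_mono (R : realType) w n m : (n <= m)%N -> uu w n <= uu w m :> R.
Proof.
move=> /subnKC <-; elim: (m - n)%N => [|d IH]; first by rewrite addn0.
by rewrite addnS; apply: le_trans IH (uu_step _ _ _).
Qed.

Lemma uu_tail (R : realType) w n m : (n <= m)%N -> uu w m + ee m <= uu w n + ee n :> R.
Proof.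
move=> /subnKC <-; elim: (m - n)%N => [|d IH]; first by rewrite addn0.
rewrite addnS uuS; have := bit_bound R (w (n + d)%N) (n + d); have := ee_half R (n + d).
lra.
Qed.

Lemma uu_ge0 (R : realType) w n : 0 <= uu w n :> R.
Proof. by rewrite -(uu0 R w); apply: uu_mono. Qed.

Lemma uu_le1 (R : realType) w n : uu w n + ee n <= 1 :> R.
Proof. by have := uu_tail R w (leq0n n); rewrite uu0 ee0 add0r. Qed.

Lemma uu_ub (R : realType) w n m : uu w m <= uu w n + ee n :> R.
Proof.
case: (leqP m n) => h.
  by have := uu_mono R w h; have := ee_pos R n; lra.
by have := uu_tail R w (ltnW h); have := ee_pos R m; lra.
Qed.

Lemma lim_sup (R : realType) (u : nat -> R) : nondecreasing_seq u ->
  (forall n, u n <= 1) -> limn u = sup (range u).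
Proof.
move=> hu hb; apply: cvg_lim; first exact: Rhausdorff.
apply: nondecreasing_cvgn => //.
by exists 1 => _ [n _ <-].
Qed.

Lemma uu_nd (R : realType) w : nondecreasing_seq (uu (R:=R) w).
Proof. by apply/nondecreasing_seqP => n; apply: uu_step. Qed.

Lemma ival_sup (R : realType) w : ival w = sup (range (uu (R:=R) w)).
Proof.
apply: lim_sup; first exact: uu_nd.
by move=> n; change (uu w n <= 1 :> R); have := uu_le1 R w n; have := ee_pos R n; lra.
Qed.

Lemma ival_ge (R : realType) w n : uu w n <= ival w :> R.
Proof.
rewrite ival_sup; apply: sup_upper_bound; last by exists n.
split; first by exists (uu w 0), 0%N.
by exists 1 => _ [m _ <-]; have := uu_le1 R w m; have := ee_pos R m; lra.
Qed.

Lemma ival_le (R : realType) w n : ival w <= uu w n + ee n :> R.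
Proof.
rewrite ival_sup; apply: ge_sup; first by exists (uu w 0), 0%N.
by move=> _ [m _ <-]; apply: uu_ub.
Qed.

Lemma ival_gt (R : realType) w n : not_end0 w -> uu w n < ival w :> R.
Proof.
move=> h; have [j [hj wj]] := h n.
apply: (lt_le_trans _ (ival_ge R w j.+1)).
rewrite uuS wj /= mul1r; have := uu_mono R w hj; have := ee_pos R j.+1; rewrite /ee; lra.
Qed.

Lemma ival_pos (R : realType) w : not_end0 w -> 0 < ival w :> R.
Proof. by move=> h; have := ival_gt R 0 h; rewrite uu0. Qed.

Lemma ival_le1 (R : realType) w : ival w <= 1 :> R.
Proof. by have := ival_le R w 0; rewrite uu0 ee0 add0r. Qed.

Lemma ival_ge0 (R : realType) w : 0 <= ival w :> R.
Proof. by have := ival_ge R w 0; rewrite uu0. Qed.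

Lemma mkseq_eq (w w' : nat -> bool) m : (forall i, (i < m)%N -> w i = w' i) ->
  mkseq w m = mkseq w' m.
Proof. by move=> h; apply/eq_in_map => i; rewrite mem_iota => /andP[_ hi]; apply: h. Qed.

Lemma ival_lt_aux (R : realType) w w' m : (forall i, (i < m)%N -> w i = w' i) ->
  w m = false -> w' m = true -> not_end0 w' -> ival w < ival w' :> R.
Proof.
move=> heq hw hw' h'.
have e : uu w m = uu w' m :> R by rewrite /uu (mkseq_eq heq).
have h1 := ival_le R w m.+1; rewrite uuS hw /= mul0r addr0 in h1.
have h2 := ival_gt R m.+1 h'; rewrite uuS hw' /= mul1r in h2.
rewrite /ee in h1 h2 *; lra.
Qed.

Lemma ival_inj (R : realType) w w' : not_end0 w -> not_end0 w' ->
  ival w = ival w' :> R -> w = w'.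
Proof.
move=> h h' e; apply: funext => i0; apply: NNPP => hne.
have ex : exists i, w i != w' i by exists i0; apply/eqP.
case: (ex_minnP ex) => m /eqP hm hmin.
have heq i : (i < m)%N -> w i = w' i.
  by move=> hi; apply: NNPP => hn; have := hmin i (introN eqP hn); lia.
case ewm : (w m) hm => hm.
  have ew' : w' m = false by case: (w' m) hm.
  have := ival_lt_aux R (fun i hi => esym (heq i hi)) ew' ewm h; rewrite e; lra.
have ew' : w' m = true by case: (w' m) hm.
have := ival_lt_aux R heq ewm ew' h'; rewrite e; lra.
Qed.

Lemma tilde_ival (R : realType) w : not_end0 w -> tilde (ival w : R) = w.
Proof.
move=> h; rewrite /tilde.
have := epsilon_spec (inhabits (fun _ : nat => false))
   (fun w' => not_end0 w' /\ ival w' = (ival w : R)) (ex_intro _ w (conj h erefl)).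
case=> h1 h2; exact: ival_inj h1 h h2.
Qed.

Lemma isPre_uu (R : realType) t w : isPre t w -> fval t = uu w (size t) :> R.
Proof. by move=> /isPre_mkseq {1}->. Qed.

Lemma sup_range_uu (R : realType) w : has_sup (range (uu (R:=R) w)).
Proof.
split; first by exists (uu w 0), 0%N.
by exists 1 => _ [m _ <-]; have := uu_le1 R w m; have := ee_pos R m; lra.
Qed.

Lemma sigma_val_eq (R : realType) k (sigma : k.-tuple bool -> seq bool) w : (0 < k)%N ->
  inf sigma w -> sigma_val sigma w = ival (Sinf sigma w) :> R.
Proof.
move=> k0 hinf; set W := Sinf sigma w.
pose s n := size (sigma_pref sigma w n).
have hp n : isPre (sigma_pref sigma w n) W by move=> m hm; rewrite /W (Sinf_pref hm).
have ev : (fun n => fval (sigma_pref sigma w n) : R) = (fun n => uu W (s n)).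
  by apply: funext => n; rewrite (isPre_uu R (hp n)).
rewrite /sigma_val ev ival_sup.
have hvnd : nondecreasing_seq (fun n => uu (R:=R) W (s n)).
  by move=> n m hnm; apply: uu_mono; apply: size_prefixw; apply: sp_mono.
have hvb n : uu (R:=R) W (s n) <= 1 by have := uu_le1 R W (s n); have := ee_pos R (s n); lra.
have hsv : has_sup (range (fun n => uu (R:=R) W (s n))).
  by split; [exists (uu W (s 0%N)), 0%N | exists 1 => _ [m _ <-]].
rewrite lim_sup //; apply/le_anti/andP; split.
  apply: ge_sup; first by exists (uu W (s 0%N)), 0%N.
  move=> _ [n _ <-]; apply: sup_upper_bound; first exact: sup_range_uu.
  by exists (s n).
apply: ge_sup; first by exists (uu W 0), 0%N.
move=> _ [n _ <-]; have [N hN] := hinf n.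
apply: le_trans (uu_mono R W (ltnW hN)) _.
by apply: sup_upper_bound => //; exists N.
Qed.

Lemma Sinf_periodic k (sigma : k.-tuple bool -> seq bool) weps : (0 < k)%N ->
  sigma weps = [::] -> forall m, Sinf sigma (Defs.periodic weps) m = false.
Proof.
move=> k0 hw m; apply: Sinf_none => n.
have -> : sigma_pref sigma (Defs.periodic weps) n = [::]; last by [].
apply: flatten_map_nil => i _.
have -> : iblock k (Defs.periodic weps) i = weps; last by [].
apply: eq_from_tnth => j; rewrite tnth_mktuple /Defs.periodic modnMDl modn_small //.
by rewrite (tnth_nth false).
Qed.

Lemma f_step (R : realType) k (sigma : k.-tuple bool -> seq bool) weps V : (0 < k)%N ->
  sigma weps = [::] -> not_end0 V -> not_end0 (Sinf sigma V) ->
  f_sigma sigma weps (ival V : R) = ival (Sinf sigma V).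
Proof.
move=> k0 hw h1 h2; rewrite /f_sigma asboolT; first by rewrite tilde_ival // sigma_val_eq //; apply: not_end0_inf.
split; first by rewrite ival_pos // ival_le1.
rewrite tilde_ival // => e; move: h2; rewrite e => h2.
by have [m [_]] := h2 0%N; rewrite Sinf_periodic.
Qed.

Lemma orbit_eq (R : realType) k (sigma : k.-tuple bool -> seq bool) weps X : (0 < k)%N ->
  sigma weps = [::] -> (forall j, not_end0 (iter j (Sinf sigma) X)) ->
  forall n, iter n (f_sigma sigma weps) (ival X : R) = ival (iter n (Sinf sigma) X).
Proof.
move=> k0 hw h; elim=> [|n IH] //=; rewrite IH f_step //; exact: (h n.+1).
Qed.

Lemma approx_pre (R : realType) t W : isPre t W ->
  (fval t : R) <= (ival W : R) <= (fval t + ee (size t) : R).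
Proof. by move=> h; rewrite (isPre_uu R h) ival_ge ival_le. Qed.

Fixpoint gw (R : realType) (y : R) (n : nat) : seq bool :=
  if n is n'.+1 then rcons (gw y n') (fval (gw y n') + ee n'.+1 <= y) else [::].

Lemma size_gw (R : realType) (y : R) n : size (gw y n) = n.
Proof. by elim: n => //= n IH; rewrite size_rcons IH. Qed.

Lemma gw_spec (R : realType) (y : R) n : 0 <= y <= 1 ->
  fval (gw y n) <= y <= fval (gw y n) + ee n.
Proof.
move=> /andP[y0 y1]; elim: n => [|n IH] /=.
  by rewrite /fval big_ord0 ee0 add0r y0 y1.
rewrite fval_rcons size_gw; have := ee_half R n; move: IH => /andP[h1 h2].
case hb : (fval (gw y n) + ee n.+1 <= y) => /=.
  by rewrite mul1r -/(@ee R n.+1) => he; apply/andP; split; lra.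
rewrite mul0r addr0 => he; move/negbT: hb; rewrite -ltNge => hb; apply/andP; split; lra.
Qed.

Lemma approx_y (R : realType) (y : R) n W : 0 <= y <= 1 -> isPre (gw y n) W ->
  `|ival W - y| <= ee n.
Proof.
move=> hy hp; have := gw_spec n hy; have := approx_pre R hp; rewrite size_gw.
move=> /andP[a1 a2] /andP[b1 b2]; rewrite ler_norml; apply/andP; split; lra.
Qed.

Lemma ee_small (R : realType) (e : R) : 0 < e -> exists n, ee n < e.
Proof.
move=> e0; have h := @archi_boundP R (e^-1) (ltW (eq_ind_r is_true e0 (invr_gt0 e))).
set N := Num.Def.archi_bound _ in h.
exists N; rewrite /ee invf_plt ?posrE ?exprn_gt0 //.
apply: lt_le_trans h _; rewrite -natrX ler_nat; exact: ltnW (ltn_expl _ _).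
Qed.

Lemma closure_approx (R : realType) (A : set R) y :
  (forall e : R, 0 < e -> exists a, A a /\ `|y - a| < e) -> closure A y.
Proof.
move=> h B /nbhs_ballP [e e0 hB]; have [a [Aa ha]] := h e e0.
by exists a; split => //; apply: hB.
Qed.

Lemma no_inj_cantor : ~ exists g : (nat -> bool) -> nat, injective g.
Proof.
move=> [g hg].
pose h n := epsilon (inhabits (fun _ : nat => false)) (fun c => g c = n).
pose d m := ~~ h m m.
have hd : h (g d) = d.
  have := epsilon_spec (inhabits (fun _ : nat => false)) (fun c => g c = g d) (ex_intro _ d erefl).
  by move=> /hg.
have e : d (g d) = ~~ d (g d) by rewrite [in LHS]/d hd.
by move: e; case: (d (g d)).
Qed.

Unset Implicit Arguments.

Theorem lemma4p3 (R : realType) (k : nat) (sigma : k.-tuple bool -> seq bool)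
  (weps : k.-tuple bool) :
  (2 <= k)%N ->
  sigma weps = [::] ->
  (forall b, sigma b = [::] -> b = weps) ->
  strongly_erasing sigma ->
  val weps <> nseq k true ->
  optimal sigma ->
  let D := [set x : R | x \in `[0, 1] /\
              `[0, 1] `<=` closure (range (fun n => iter n (f_sigma sigma weps) x))] in
  ~ countable D /\ `[(0:R), 1] `<=` closure D.
Proof.
move=> k2 hw _ se _ opt D.
have k0 : (0 < k)%N by lia.
have inD c u0 : D (ival (Xw sigma c u0)).
  split; first by rewrite inE /= in_itv /= ival_ge0 ival_le1.
  move=> y hy; apply: closure_approx => e e0.
  have hy' : 0 <= y <= 1 by move: hy; rewrite /= in_itv.
  have [n hn] := ee_small e0.
  have [N hN] := Xw_target k0 opt se c u0 (gw y n).
  exists (iter N (f_sigma sigma weps) (ival (Xw sigma c u0))); split; first by exists N.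
  rewrite (orbit_eq R k0 hw (Xw_not_end0 k0 opt se c u0)) distrC.
  exact: le_lt_trans (approx_y hy' hN) hn.
split.
  move=> /countable_injP [f hf].
  apply: no_inj_cantor; exists (fun c => f (ival (Xw sigma c [::]))) => c c' e.
  have e1 := hf _ _ (mem_set (inD c [::])) (mem_set (inD c' [::])) e.
  apply: (@Xw_inj _ sigma [::]); apply: (@ival_inj R _ _ _ _ e1).
    exact: (Xw_not_end0 k0 opt se c [::] 0).
  exact: (Xw_not_end0 k0 opt se c' [::] 0).
move=> y hy; apply: closure_approx => e e0.
have hy' : 0 <= y <= 1 by move: hy; rewrite /= in_itv.
have [n hn] := ee_small e0.
exists (ival (Xw sigma (fun _ => false) (gw y n))); split; first exact: inD.
rewrite distrC; apply: le_lt_trans (approx_y hy' _) hn.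
exact: u0_Pseq.
Qed.
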